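(* Let $T\geq 3$ be an integer, $L>0$, $D>0$, and let $\mathcal{K}\subset\mathbb{R}^d$ be a nonempty closed convex set with diameter at most $D$. For $t=1,\dots,T$ let $\ell_t(x)=\langle g_t,x\rangle$ be linear cost functions with $\|g_t\|\leq L$. Set $$\eta=\frac{D}{2L}\left(\frac{3}{T}\right)^{3/4},\qquad \sigma=\min\left(1,\sqrt{\frac{3}{T}}\right).$$ Let $x_1\in\mathcal{K}$ and define the Online Frank--Wolfe iterates: for $t=1,\dots,T$, $\mathrm{dir}_t=\eta\sum_{s=1}^t g_s+(x_t-x_1)$, $v_t\in\arg\min_{v\in\mathcal{K}}\langle\mathrm{dir}_t,v\rangle$, $x_{t+1}=(1-\sigma)x_t+\sigma v_t$. Define the Follow-The-Regularized-Leader iterates $y_1=x_1$ and, for $t=1,\dots,T$, $$y_{t+1}=\arg\min_{y\in\mathcal{K}}\ \eta\Big\langle\sum_{s=1}^t g_s,y\Big\rangle+\frac12\|y-x_1\|^2.$$ For $0\leq t\leq T$ define the potential $$\phi_t\triangleq\sum_{s=1}^t\langle g_s,x_s-y_{t+1}\rangle+\frac{1}{6\eta}\|x_{t+1}-y_{t+1}\|^2-\frac{1}{2\eta}\|y_{t+1}-x_1\|^2.$$ Then for every $t\in\{1,\dots,T\}$, $$\phi_t-\phi_{t-1}\leq\frac{2D}{L\,3^{3/4}T^{1/4}}\|g_t\|^2+\frac{L}{D\,3^{3/4}T^{1/4}}\|x_t-v_t\|^2.$$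
   Context: $\|\cdot\|$ is the Euclidean norm; $v_t$ is any minimizer of the linear function over $\mathcal{K}$ (the output of a linear optimization oracle). The FTRL minimizer is unique by strong convexity. *)

(* Defs.v *)
From HB Require Import structures.
From mathcomp Require Import all_boot all_order all_algebra.
From mathcomp Require Import all_classical all_reals all_analysis.
From mathcomp Require Import matrix_topology matrix_normedtype.
Import numFieldNormedType.Exports.
Set Implicit Arguments. Unset Strict Implicit. Unset Printing Implicit Defensive.
Import Order.TTheory GRing.Theory Num.Theory.
Local Open Scope classical_set_scope.
Local Open Scope ring_scope.

Definition dotv (R : realType) (d : nat) (u v : 'rV[R]_d) : R :=
  \sum_(i < d) u ord0 i * v ord0 i.
Definition enorm (R : realType) (d : nat) (u : 'rV[R]_d) : R :=
  Num.sqrt (dotv u u).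

Definition diam_le (R : realType) (d : nat) (K : set 'rV[R]_d) (D : R) : Prop :=
  forall a b, K a -> K b -> enorm (a - b) <= D.

Definition is_argmin (R : realType) (d : nat) (K : set 'rV[R]_d)
  (f : 'rV[R]_d -> R) (z : 'rV[R]_d) : Prop :=
  K z /\ forall w, K w -> f z <= f w.

Definition gsum (R : realType) (d : nat) (g : nat -> 'rV[R]_d) (t : nat) : 'rV[R]_d :=
  \sum_(1 <= s < t.+1) g s.

Definition phi (R : realType) (d : nat) (eta : R) (g x y : nat -> 'rV[R]_d) (t : nat) : R :=
  \sum_(1 <= s < t.+1) dotv (g s) (x s - y t.+1)
  + (6 * eta)^-1 * enorm (x t.+1 - y t.+1) ^+ 2
  - (2 * eta)^-1 * enorm (y t.+1 - x 1%N) ^+ 2.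

(* Main.v *)
Require Import Defs.
From HB Require Import structures.
From mathcomp Require Import all_boot all_order all_algebra.
From mathcomp Require Import all_classical all_reals all_analysis.
From mathcomp Require Import matrix_topology matrix_normedtype.
From mathcomp Require Import ring lra.
Import numFieldNormedType.Exports.
Import Order.TTheory GRing.Theory Num.Theory.
Local Open Scope classical_set_scope.
Local Open Scope ring_scope.

Section Dot.
Variables (R : realType) (d : nat).
Implicit Types (u v w : 'rV[R]_d) (a : R).

Lemma dotvC u v : dotv u v = dotv v u.
Proof. by rewrite /dotv; apply: eq_bigr => i _; rewrite mulrC. Qed.
Lemma dotvDl u v w : dotv (u + v) w = dotv u w + dotv v w.
Proof. by rewrite /dotv -big_split /=; apply: eq_bigr => i _; rewrite !mxE mulrDl. Qed.
Lemma dotvDr u v w : dotv w (u + v) = dotv w u + dotv w v.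
Proof. by rewrite dotvC dotvDl !(dotvC w). Qed.
Lemma dotvZl a u w : dotv (a *: u) w = a * dotv u w.
Proof. by rewrite /dotv mulr_sumr; apply: eq_bigr => i _; rewrite !mxE mulrA. Qed.
Lemma dotvZr a u w : dotv w (a *: u) = a * dotv w u.
Proof. by rewrite dotvC dotvZl dotvC. Qed.
Lemma dotvNl u w : dotv (- u) w = - dotv u w.
Proof. by rewrite -scaleN1r dotvZl mulN1r. Qed.
Lemma dotvNr u w : dotv w (- u) = - dotv w u.
Proof. by rewrite dotvC dotvNl dotvC. Qed.
Lemma dotv0l w : dotv 0 w = 0.
Proof. by rewrite /dotv big1 // => i _; rewrite mxE mul0r. Qed.
Lemma dotv_ge0 u : 0 <= dotv u u.
Proof. by rewrite /dotv sumr_ge0 // => i _; rewrite -expr2 sqr_ge0. Qed.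
Lemma enorm2 u : enorm u ^+ 2 = dotv u u.
Proof. by rewrite /enorm sqr_sqrtr // dotv_ge0. Qed.
Lemma dotv_suml (I : Type) (r : seq I) (P : pred I) (F : I -> 'rV[R]_d) w :
  \sum_(i <- r | P i) dotv (F i) w = dotv (\sum_(i <- r | P i) F i) w.
Proof.
by rewrite (big_morph (fun u => dotv u w) (fun p q => dotvDl p q w) (dotv0l w)).
Qed.
End Dot.

Lemma convK (R : realType) (d : nat) (K : set 'rV[R]_d) a b (l : R) :
  convex.convex_set K -> K a -> K b -> 0 <= l -> l <= 1 -> K (l *: a + (1 - l) *: b).
Proof.
move=> cK Ka Kb l0 l1.
have lP : Itv.spec (@Itv.num_sem R) (Itv.Real `[0%Z, 1%Z]) l.
  by rewrite /Itv.spec /Itv.num_sem /= in_itv /= l0 l1 num_real.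
have := cK a b (Itv.mk lP).
rewrite !inE => /(_ Ka Kb).
move=> H; exact H.
Qed.

Lemma lin_nonneg (R : realType) (a b : R) :
  0 <= b -> (forall l, 0 < l -> l <= 1 -> 0 <= a + l * b) -> 0 <= a.
Proof.
move=> b0 H; rewrite leNgt; apply/negP => a0.
pose l := Num.min 1 (- a / (b + 1)).
have b1 : 0 < b + 1 by lra.
have l0 : 0 < l by rewrite /l lt_min ltr01 /= divr_gt0 // oppr_gt0.
have l1 : l <= 1 by rewrite /l ge_min lexx.
have lb : l <= - a / (b + 1) by rewrite /l ge_min lexx orbT.
have := H l l0 l1.
have : l * (b + 1) <= - a by rewrite -ler_pdivlMr.
nra.
Qed.

Lemma first_order (R : realType) (d : nat) (K : set 'rV[R]_d) (c : R) (G x1 y : 'rV[R]_d) :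
  convex.convex_set K ->
  K y -> (forall w, K w -> c * dotv G y + 2^-1 * enorm (y - x1) ^+ 2
                           <= c * dotv G w + 2^-1 * enorm (w - x1) ^+ 2) ->
  forall w, K w -> 0 <= dotv (c *: G + (y - x1)) (w - y).
Proof.
move=> cK Ky Hmin w Kw.
apply: (@lin_nonneg _ _ (2^-1 * dotv (w - y) (w - y))).
  by rewrite mulr_ge0 // dotv_ge0.
move=> l l0 l1.
have Kz := @convK _ _ K w y l cK Kw Ky (ltW l0) l1.
have := Hmin _ Kz.
have -> : l *: w + (1 - l) *: y - x1 = (y - x1) + l *: (w - y).
  by apply/rowP => i; rewrite !mxE; ring.
have -> : l *: w + (1 - l) *: y = y + l *: (w - y).
  by apply/rowP => i; rewrite !mxE; ring.
move: (w - y) (y - x1) => e f.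
rewrite !enorm2 !(dotvDl, dotvDr, dotvZl, dotvZr) [dotv e f]dotvC.
set A := dotv e e.
set B := dotv f e.
set C := dotv G e.
move=> h.
have h2 : 0 <= l * (c * C + B + l * (2^-1 * A)) by lra.
by rewrite pmulr_rge0 // in h2.
Qed.

Ltac dnorm Gp a g u w q :=
  rewrite ?(dotvDl, dotvDr, dotvZl, dotvZr, dotvNl, dotvNr)
    ?[dotv a Gp]dotvC ?[dotv g Gp]dotvC ?[dotv u Gp]dotvC ?[dotv w Gp]dotvC ?[dotv q Gp]dotvC
    ?[dotv g a]dotvC ?[dotv u a]dotvC ?[dotv w a]dotvC ?[dotv q a]dotvC
    ?[dotv u g]dotvC ?[dotv w g]dotvC ?[dotv q g]dotvC
    ?[dotv w u]dotvC ?[dotv q u]dotvC ?[dotv q w]dotvC.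

Lemma key (R : realType) (d : nat) (Gp a g u w q : 'rV[R]_d) (eta sigma : R) :
 0 < eta -> 0 < sigma ->
 0 <= dotv (eta *: Gp + a) w ->
 0 <= dotv (eta *: (Gp + g) + (a + w)) (- w) ->
 dotv (eta *: (Gp + g) + (u + w + a)) (u - q) <= 0 ->
 0 <= dotv (eta *: (Gp + g) + (a + w)) (u - q) ->
 dotv g u + dotv Gp (- w) + (6 * eta)^-1 * (enorm (u - sigma *: q) ^+ 2 - enorm (u + w) ^+ 2)
   - (2 * eta)^-1 * (enorm (a + w) ^+ 2 - enorm a ^+ 2)
 <= 4 * eta / (3 * sigma) * enorm g ^+ 2 + sigma ^+ 2 / (6 * eta) * enorm q ^+ 2.
Proof.
move=> e0 s0 H1 H2 H3 H4.
have Y1 := @dotv_ge0 _ _ (eta *: g - (sigma / 2) *: u).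
have Y2 := @dotv_ge0 _ _ ((sigma / 2) *: u + w).
have Y3 := @dotv_ge0 _ _ (w + eta *: g).
have Y4 := @dotv_ge0 _ _ w.
rewrite !enorm2.
move: H1 H2 H3 H4 Y1 Y2 Y3 Y4.
dnorm Gp a g u w q.
set gg := dotv g g; set uu := dotv u u; set ww := dotv w w; set qq := dotv q q.
set gu := dotv g u; set gw := dotv g w; set uw := dotv u w; set uq := dotv u q.
set Gw := dotv Gp w; set aw := dotv a w.
move=> H1 H2 H3 H4 Y1 Y2 Y3 Y4.
have hU : uu <= uq by lra.
have hP1 : 0 <= sigma * (eta * Gw + aw) by rewrite mulr_ge0 // ltW.
have hP2 : 0 <= sigma * ww by rewrite mulr_ge0 // ltW.
have hP3 : 0 <= sigma ^+ 2 * (uq - uu) by rewrite mulr_ge0 ?sqr_ge0 // subr_ge0.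
have hpoly : 0 <= 16 * eta ^+ 2 * gg - 12 * eta * sigma * gu + 12 * eta * sigma * Gw
   + 4 * sigma ^+ 2 * uq + 4 * sigma * uw + 8 * sigma * ww + 12 * sigma * aw.
  have hW : ww <= eta ^+ 2 * gg by lra.
  lra.
rewrite -subr_ge0.
have en : eta != 0 by rewrite gt_eqF.
have sn : sigma != 0 by rewrite gt_eqF.
set P := (X in 0 <= X).
have -> : P = (12 * eta * sigma)^-1 * (16 * eta ^+ 2 * gg - 12 * eta * sigma * gu + 12 * eta * sigma * Gw
   + 4 * sigma ^+ 2 * uq + 4 * sigma * uw + 8 * sigma * ww + 12 * sigma * aw).
  rewrite /P; field.
  by rewrite sn en.
by rewrite mulr_ge0 // invr_ge0 !mulr_ge0 // ltW.
Qed.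
Lemma powfacts (R : realType) (T : nat) : (3 <= T)%N ->
  let p := (3 / T%:R : R) `^ (4^-1) in
  [/\ 0 < p, p ^+ 4 = 3 / T%:R, (3 / T%:R) `^ (3 / 4) = p ^+ 3,
      Num.sqrt (3 / T%:R) = p ^+ 2 &
      3 `^ (3 / 4) * T%:R `^ (1 / 4) = p ^+ 3 * T%:R].
Proof.
move=> T3 p.
have T0 : (0 : R) < T%:R by rewrite ltr0n; apply: leq_trans T3.
have q0 : (0 : R) <= 3 / T%:R by rewrite divr_ge0 // ltW.
have q0' : (0 : R) < 3 / T%:R by rewrite divr_gt0.
have pn : forall n : nat, p ^+ n = (3 / T%:R) `^ (4^-1 * n%:R).
  by move=> n; rewrite powRrM powR_mulrn // powR_ge0.
have p0 : 0 < p by rewrite /p powR_gt0.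
have p4 : p ^+ 4 = 3 / T%:R.
  by rewrite pn mulVf ?powRr1 // pnatr_eq0.
have p3 : (3 / T%:R) `^ (3 / 4) = p ^+ 3.
  by rewrite pn; congr (_ `^ _); field.
split => //.
  by rewrite pn -powR12_sqrt //; congr (_ `^ _); field.
have -> : (3 : R) `^ (3 / 4) = (3 / T%:R * T%:R) `^ (3 / 4) by rewrite divfK // gt_eqF.
rewrite powRM // ?ltW // p3 -mulrA -powRD; last by apply/implyP => _; rewrite gt_eqF.
have -> : (3 / 4 + 1 / 4 : R) = 1 by field.
by rewrite powRr1 // ltW.
Qed.

Theorem lemma1 (R : realType) (d T : nat) (L D : R) (K : set 'rV[R]_d)
  (g x v y : nat -> 'rV[R]_d) :
  (3 <= T)%N -> 0 < L -> 0 < D ->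
  closed K -> convex.convex_set K -> diam_le K D ->
  (forall t, (1 <= t <= T)%N -> enorm (g t) <= L) ->
  let eta := D / (2 * L) * (3 / T%:R) `^ (3 / 4) in
  let sigma := Num.min 1 (Num.sqrt (3 / T%:R)) in
  K (x 1%N) ->
  (forall t, (1 <= t <= T)%N ->
     is_argmin K (fun w => dotv (eta *: gsum g t + (x t - x 1%N)) w) (v t)) ->
  (forall t, (1 <= t <= T)%N -> x t.+1 = (1 - sigma) *: x t + sigma *: v t) ->
  y 1%N = x 1%N ->
  (forall t, (1 <= t <= T)%N ->
     is_argmin K (fun w => eta * dotv (gsum g t) w + 2^-1 * enorm (w - x 1%N) ^+ 2)
       (y t.+1)) ->
  forall t, (1 <= t <= T)%N ->
    phi eta g x y t - phi eta g x y t.-1 <=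
      2 * D / (L * 3 `^ (3 / 4) * T%:R `^ (1 / 4)) * enorm (g t) ^+ 2
      + L / (D * 3 `^ (3 / 4) * T%:R `^ (1 / 4)) * enorm (x t - v t) ^+ 2.
Proof.
move=> T3 L0 D0 _ cK _ _ eta sigma Kx1 hv hx y1 hy t /andP[t1 tT].
have [p0 p4 p3 p2 pc] := @powfacts R T T3.
set p := (3 / T%:R : R) `^ 4^-1 in p0 p4 p3 p2 pc.
have T0 : (0 : R) < T%:R by rewrite ltr0n; apply: leq_trans T3.
have p1 : p ^+ 2 <= 1.
  have : p ^+ 4 <= 1 by rewrite p4 ler_pdivrMr // mul1r ler_nat.
  have : 0 <= p ^+ 2 by rewrite sqr_ge0.
  nra.
have heta : eta = D / (2 * L) * p ^+ 3 by rewrite /eta p3.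
have hsig : sigma = p ^+ 2 by rewrite /sigma p2; apply/min_idPr.
have eta0 : 0 < eta.
  rewrite heta; apply: mulr_gt0; last exact: exprn_gt0.
  by apply: divr_gt0 => //; apply: mulr_gt0.
have sig0 : 0 < sigma by rewrite hsig exprn_gt0.
have FO : forall s, (s <= T)%N -> K (y s.+1) /\
   forall w, K w -> 0 <= dotv (eta *: gsum g s + (y s.+1 - x 1%N)) (w - y s.+1).
  case=> [|s] sT.
    split; first by rewrite y1.
    move=> w _; rewrite y1 subrr /gsum big_geq // scaler0 add0r dotv0l //.
  have [Ky Hm] := hy s.+1 sT.
  split => //.
  exact: (@first_order _ _ K eta (gsum g s.+1) (x 1%N) (y s.+2) cK Ky Hm).
case: t t1 tT => // s _ sT.
have [Ky1 FO1] := FO s (ltnW sT).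
have [Ky2 FO2] := FO s.+1 sT.
have [Kv hvm] := hv s.+1 sT.
have gS : gsum g s.+1 = gsum g s + g s.+1.
  by rewrite /gsum big_nat_recr.
set Gp := gsum g s.
set a := y s.+1 - x 1%N.
set u := x s.+1 - y s.+2.
set w := y s.+2 - y s.+1.
set q := x s.+1 - v s.+1.
have e1 : y s.+2 - x 1%N = a + w by apply/rowP => i; rewrite !mxE; ring.
have e2 : y s.+1 - y s.+2 = - w by apply/rowP => i; rewrite !mxE; ring.
have e3 : v s.+1 - y s.+2 = u - q by apply/rowP => i; rewrite !mxE; ring.
have e4 : x s.+1 - x 1%N = u + w + a by apply/rowP => i; rewrite !mxE; ring.
have e5 : x s.+2 - y s.+2 = u - sigma *: q.
  by rewrite hx //; apply/rowP => i; rewrite !mxE; ring.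
have e6 : x s.+1 - y s.+1 = u + w by apply/rowP => i; rewrite !mxE; ring.
have H1 : 0 <= dotv (eta *: Gp + a) w := FO1 _ Ky2.
have H2 : 0 <= dotv (eta *: (Gp + g s.+1) + (a + w)) (- w).
  by rewrite -gS -e1 -e2; apply: FO2.
have H4 : 0 <= dotv (eta *: (Gp + g s.+1) + (a + w)) (u - q).
  by rewrite -gS -e1 -e3; apply: FO2.
have H3 : dotv (eta *: (Gp + g s.+1) + (u + w + a)) (u - q) <= 0.
  rewrite -gS -e4 -e3 dotvDr dotvNr subr_le0; exact: hvm.
have := @key _ _ Gp a (g s.+1) u w q eta sigma eta0 sig0 H1 H2 H3 H4.
have -> : phi eta g x y s.+1 - phi eta g x y s.+1.-1 =
  dotv (g s.+1) u + dotv Gp (- w) + (6 * eta)^-1 * (enorm (u - sigma *: q) ^+ 2 - enorm (u + w) ^+ 2)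
   - (2 * eta)^-1 * (enorm (a + w) ^+ 2 - enorm a ^+ 2).
  rewrite /phi /= e5 e1 e6 -/a big_nat_recr //=.
  have -> : \sum_(1 <= i < s.+1) dotv (g i) (x i - y s.+2)
     = \sum_(1 <= i < s.+1) dotv (g i) (x i - y s.+1) + dotv Gp (- w).
    rewrite /Gp /gsum -dotv_suml -big_split /=; apply: eq_bigr => i _.
    rewrite -dotvDr; congr dotv; apply/rowP => j; rewrite !mxE; ring.
  rewrite -/u; ring.
move/le_trans; apply.
have c1 : 4 * eta / (3 * sigma) = 2 * D / (L * 3 `^ (3 / 4) * T%:R `^ (1 / 4)).
  have hT : T%:R = 3 / p ^+ 4.
    by rewrite p4; field; rewrite gt_eqF.
  by rewrite -[L * _ * _]mulrA pc heta hsig hT; field; rewrite !gt_eqF.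
have c2 : sigma ^+ 2 / (6 * eta) = L / (D * 3 `^ (3 / 4) * T%:R `^ (1 / 4)).
  have hT : T%:R = 3 / p ^+ 4.
    by rewrite p4; field; rewrite gt_eqF.
  by rewrite -[D * _ * _]mulrA pc heta hsig hT; field; rewrite !gt_eqF.
by rewrite c1 c2.
Qed.
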